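(* Let $(X,d)$ be a complete metric space and $T\colon X\to X$ a mapping for which there exists $k<\kappa(X)$ such that for all $(x,y)\in X\times X$ with $D(x,o(y))\le D(x,o(x))$ and all $n\in\mathbb N$, $$\lim_{m\to\infty} D(T^nx,o(T^my))\le k\,D(x,o(y)).$$ Then either all the orbits are unbounded or there exists $x\in X$ with $Tx=x$.
   Context: The orbit of $x$ under $T$ is $o(x)=\{x\}\cup\{T^nx:n\in\mathbb N\}$; for nonempty $C\subseteq X$, $D(x,C)=\sup\{d(x,y):y\in C\}$. $B(x,r)$ denotes the closed ball. For $c\ge1$, balls in $X$ are $c$-regular if for every $k'<c$ there are $\mu,\alpha\in(0,1)$ such that for all $x,y\in X$ and $r>0$ with $d(x,y)\ge(1-\mu)r$ there exists $z\in X$ with $B(x,(1+\mu)r)\cap B(y,k'(1+\mu)r)\subseteq B(z,\alpha r)$. The Lifschitz characteristic is $\kappa(X)=\sup\{c\ge1:\text{balls in }X\text{ are }c\text{-regular}\}$. *)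

(* Defs.v *)
From mathcomp Require Import all_boot all_order all_algebra.
From mathcomp Require Import all_classical all_reals all_analysis.
Set Implicit Arguments. Unset Strict Implicit. Unset Printing Implicit Defensive.
Import Order.TTheory GRing.Theory Num.Theory.
Local Open Scope classical_set_scope.
Local Open Scope ring_scope.

Definition is_metric (R : realType) (X : Type) (d : X -> X -> R) : Prop :=
  (forall x y, 0 <= d x y) /\ (forall x y, d x y = 0 <-> x = y) /\
  (forall x y, d x y = d y x) /\ (forall x y z, d x z <= d x y + d y z).

Definition is_complete (R : realType) (X : Type) (d : X -> X -> R) : Prop :=
  forall u : nat -> X,
    (forall e : R, 0 < e -> exists N, forall m n, (N <= m)%N -> (N <= n)%N ->
        d (u m) (u n) < e) ->
    exists l : X, forall e : R, 0 < e -> exists N, forall n, (N <= n)%N ->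
        d (u n) l < e.

Definition mcball (R : realType) (X : Type) (d : X -> X -> R) (x : X) (r : R)
  : set X := [set y | d x y <= r].

Definition torbit (X : Type) (T : X -> X) (x : X) : set X :=
  [set x] `|` [set iter n T x | n in [set n : nat | (0 < n)%N]].

Definition Dsup (R : realType) (X : Type) (d : X -> X -> R) (x : X) (C : set X)
  : \bar R := ereal_sup [set (d x y)%:E | y in C].

Definition mbounded (R : realType) (X : Type) (d : X -> X -> R) (A : set X)
  : Prop := exists x0 : X, exists r : R, forall y, A y -> d x0 y <= r.

Definition c_regular (R : realType) (X : Type) (d : X -> X -> R) (c : R) : Prop :=
  forall k' : R, k' < c ->
    exists mu alpha : R, 0 < mu < 1 /\ 0 < alpha < 1 /\
      forall (x y : X) (r : R), 0 < r -> (1 - mu) * r <= d x y ->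
        exists z : X,
          mcball d x ((1 + mu) * r) `&` mcball d y (k' * ((1 + mu) * r))
            `<=` mcball d z (alpha * r).

Definition lifschitz_char (R : realType) (X : Type) (d : X -> X -> R) : \bar R :=
  ereal_sup [set c%:E | c in [set c : R | 1 <= c /\ c_regular d c]].

(* Main.v *)
Require Import Defs.
From mathcomp Require Import all_boot all_order all_algebra.
From mathcomp Require Import all_classical all_reals all_analysis.
From mathcomp Require Import ring lra.
Import Order.TTheory GRing.Theory Num.Theory.
Local Open Scope classical_set_scope.
Local Open Scope ring_scope.

Module Helpers1.
Set Implicit Arguments. Unset Strict Implicit.

Section H.
Variables (R : realType) (X : Type) (d : X -> X -> R) (T : X -> X).

Lemma Dsup_leP z (A : set X) r :
  (Dsup d z A <= r%:E)%E <-> (forall y, A y -> d z y <= r).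
Proof.
split.
- move=> H y Ay; rewrite -lee_fin; apply: le_trans H.
  by apply: ereal_sup_ubound; exists y.
- move=> H; apply: ge_ereal_sup => _ [y Ay <-]; rewrite lee_fin; exact: H.
Qed.

Lemma Dsup_ge z (A : set X) y : A y -> ((d z y)%:E <= Dsup d z A)%E.
Proof. by move=> Ay; apply: ereal_sup_ubound; exists y. Qed.

Lemma orbit_iter w m : torbit T w (iter m T w).
Proof.
case: m => [|m]; first by left.
by right; exists m.+1.
Qed.

Lemma orbit_sub w m : torbit T (iter m T w) `<=` torbit T w.
Proof.
move=> y [->|[n n0 <-]]; first exact: orbit_iter.
rewrite -iterD; exact: orbit_iter.
Qed.

Lemma limn_lt (u : nat -> \bar R) a :
  (forall m, (u m.+1 <= u m)%E) -> (limn u < a)%E -> exists m, (u m < a)%E.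
Proof.
move=> hu hl.
have ni : nonincreasing_seq u.
  by apply/nonincreasing_seqP => m; exact: hu.
have := ereal_nonincreasing_cvgn ni => /cvg_lim => /(_ _) hlim.
rewrite hlim // in hl.
have [_ [m _ <-] lt] := ereal_inf_lt hl.
by exists m.
Qed.

End H.

End Helpers1.
Import Helpers1.
Module Helpers2.
Set Implicit Arguments. Unset Strict Implicit.

Section S.
Variables (R : realType) (X : Type) (d : X -> X -> R) (T : X -> X).
Hypothesis hmet : is_metric d.
Variables (kb mu alpha : R).
Hypothesis kb0 : 0 < kb.
Hypothesis mu01 : 0 < mu < 1.
Hypothesis al01 : 0 < alpha < 1.
Hypothesis HL : forall x y : X, (Dsup d x (torbit T y) <= Dsup d x (torbit T x))%E ->
      forall n : nat, (0 < n)%N ->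
        (limn (fun m : nat => Dsup d (iter n T x) (torbit T (iter m T y)))
           <= kb%:E * Dsup d x (torbit T y))%E.
Hypothesis Hreg : forall (x y : X) (r : R), 0 < r -> (1 - mu) * r <= d x y ->
        exists z : X,
          mcball d x ((1 + mu) * r) `&` mcball d y (kb * ((1 + mu) * r))
            `<=` mcball d z (alpha * r).
Hypothesis nofix : forall x, T x <> x.

Definition P z w r := forall y, torbit T w y -> d z y <= r.
Definition beta := Num.max alpha (1 - mu).

Lemma Ppos z w r : P z w r -> 0 < r.
Proof.
move=> Pz; rewrite ltNge; apply/negP => r0.
case: hmet => d0 [dE [dS _]].
have h1 : d z w = 0.
  by apply/eqP; rewrite eq_le d0 andbT; apply: le_trans r0; apply: Pz; left.
have h2 : d z (T w) = 0.
  apply/eqP; rewrite eq_le d0 andbT; apply: le_trans r0; apply: Pz.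
  by right; exists 1%N.
apply: (@nofix w); have e1 := (dE _ _).1 h1; have e2 := (dE _ _).1 h2.
by rewrite -e2 e1.
Qed.

Lemma Dsup_sub z (A B : set X) : A `<=` B -> (Dsup d z A <= Dsup d z B)%E.
Proof. by move=> AB; apply: ereal_sup_le; apply: image_subset. Qed.

Lemma step z w r : P z w r ->
  exists z' w', P z' w' (beta * r) /\ d z z' <= 2 * r.
Proof.
move=> Pz; have r0 := Ppos Pz.
case: hmet => d0 [dE [dS dT]].
case/andP: mu01 => mu0 mu1; case/andP: al01 => al0 al1.
have beta_al : alpha <= beta by rewrite /beta le_max lexx.
have beta_mu : 1 - mu <= beta by rewrite /beta le_max lexx orbT.
have dzz : d z z = 0 by apply/dE.
case: (pselect (forall n, (0 < n)%N -> d z (iter n T z) <= (1 - mu) * r)) => [H|H].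
  exists z, z; split; last by rewrite dzz mulr_ge0 // ltW.
  move=> y [->|[n n0 <-]]; first by rewrite dzz mulr_ge0 // ltW // (lt_le_trans al0).
  apply: le_trans (H n n0) _; apply: ler_wpM2r; [exact: ltW|exact: beta_mu].
have [n n0 hn] : exists2 n, (0 < n)%N & (1 - mu) * r < d z (iter n T z).
  apply: contra_notP H => H n n0; rewrite leNgt; apply/negP => h; apply: H; by exists n.
have [w' Pw' cond] : exists2 w', P z w' r &
    (Dsup d z (torbit T w') <= Dsup d z (torbit T z))%E.
  case: (leP (Dsup d z (torbit T w)) (Dsup d z (torbit T z))) => h.
    by exists w.
  exists z => //; apply/Dsup_leP; apply: le_trans (ltW h) _; exact/Dsup_leP.
have hlim := HL cond n0.
have hlt : (limn (fun m : nat => Dsup d (iter n T z) (torbit T (iter m T w')))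
    < (kb * ((1 + mu) * r))%:E)%E.
  apply: le_lt_trans hlim _.
  apply: (@le_lt_trans _ _ (kb%:E * r%:E)%E).
    by apply: lee_wpmul2l; [rewrite lee_fin ltW|exact/Dsup_leP].
  rewrite -EFinM lte_fin ltr_pM2l // ltr_pMl //.
  by rewrite ltrDl.
have [m hm] := limn_lt (fun m => Dsup_sub (iter n T z) (@orbit_sub _ T (iter m T w') 1)) hlt.
have hm' := (Dsup_leP _ _ _ _).1 (ltW hm).
have [z' hz'] := Hreg r0 (ltW hn).
exists z', (iter m T w'); split.
  move=> y hy.
  have : mcball d z' (alpha * r) y.
    apply: hz'; split; rewrite /mcball /=.
      apply: le_trans (Pw' y (@orbit_sub _ T w' m y hy)) _.
      by apply: ler_peMl; [exact: ltW|rewrite lerDl ltW].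

    exact: hm'.
  rewrite /mcball /= => h; apply: le_trans h _.
  by apply: ler_wpM2r; [exact: ltW|].
apply: le_trans (dT _ (iter m T w') _) _.
rewrite mulr2n mulrDl mul1r lerD //.
  exact/Pw'/orbit_iter.
rewrite dS.
have : mcball d z' (alpha * r) (iter m T w').
  apply: hz'; split; rewrite /mcball /=.
    apply: le_trans (Pw' _ (orbit_iter T w' m)) _.
    by apply: ler_peMl; [exact: ltW|rewrite lerDl ltW].

  exact: (hm' _ (orbit_iter T (iter m T w') 0)).
rewrite /mcball /= => h; apply: le_trans h _.
by rewrite ler_piMl // ltW.
Qed.
End S.

End Helpers2.
Import Helpers2.

Lemma geo (R : realType) (b : R) : 0 <= b < 1 -> forall eta : R, 0 < eta ->
  exists N, forall n, (N <= n)%N -> b ^+ n < eta.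
Proof.
case/andP => b0 b1 eta eta0.
have hb : `|b| < 1 by rewrite ger0_norm.
have := cvg_expr hb => /cvgrPdist_lt/(_ eta eta0) [N _ HN].
exists N => n Nn; have := HN n Nn; rewrite /= sub0r normrN ger0_norm ?exprn_ge0 //.
Qed.

Theorem corollary4p4 (R : realType) (X : Type) (d : X -> X -> R)
  (hmet : is_metric d) (hcomp : is_complete d) (T : X -> X) :
  (exists k : R, (k%:E < lifschitz_char d)%E /\
    forall x y : X, (Dsup d x (torbit T y) <= Dsup d x (torbit T x))%E ->
      forall n : nat, (0 < n)%N ->
        (limn (fun m : nat => Dsup d (iter n T x) (torbit T (iter m T y)))
           <= k%:E * Dsup d x (torbit T y))%E) ->
  (forall x : X, ~ mbounded d (torbit T x)) \/ (exists x : X, T x = x).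
Proof.
move=> [k [hk HL0]].
case: (pselect (forall x, ~ mbounded d (torbit T x))) => [h|h]; [by left|right].
have [x [x0 [R0 hb]]] : exists x, mbounded d (torbit T x).
  by apply: contra_notP h => H y hy; apply: H; exists y.
case: (pselect (exists x, T x = x)) => [//|nofix']; exfalso.
have nofix : forall x, T x <> x by move=> y hy; apply: nofix'; exists y.
case: (hmet) => d0 [dE [dS dT]].
have [_ [c [c1 creg] <-] kc] := ereal_sup_gt hk.
rewrite lte_fin in kc; clear hk.
pose kb := Num.max k (2^-1).
have kb0 : 0 < kb by rewrite lt_max; apply/orP; right.
have kbc : kb < c by rewrite gt_max kc /=; apply: lt_le_trans c1; lra.
have [mu [alpha [mu01 [al01 Hreg]]]] := creg kb kbc.
have HL : forall x y : X, (Dsup d x (torbit T y) <= Dsup d x (torbit T x))%E ->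
      forall n : nat, (0 < n)%N ->
        (limn (fun m : nat => Dsup d (iter n T x) (torbit T (iter m T y)))
           <= kb%:E * Dsup d x (torbit T y))%E.
  move=> x1 y1 cond n n0; apply: le_trans (HL0 x1 y1 cond n n0) _.
  apply: lee_wpmul2r; last by rewrite lee_fin le_max lexx.
  apply: le_trans (Dsup_ge d x1 (orbit_iter T y1 0)); by rewrite lee_fin.
have st := step hmet kb0 mu01 al01 HL Hreg nofix.
pose b := beta mu alpha.
have [b0 b1] : 0 < b /\ b < 1.
  case/andP: mu01 => ? ?; case/andP: al01 => ? ?.
  rewrite /b /beta lt_max gt_max; split; apply/orP || apply/andP; try (left; done); split; lra.
have P0 : P d T x0 x (b ^+ 0 * R0) by rewrite expr0 mul1r.
have R00 : 0 < R0 by rewrite -[R0]mul1r -(expr0 b); apply: (Ppos hmet nofix P0).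
have [g hg] : exists g : nat * (X * X) -> X * X, forall jp,
    P d T jp.2.1 jp.2.2 (b ^+ jp.1 * R0) ->
    P d T (g jp).1 (g jp).2 (b ^+ jp.1.+1 * R0) /\
    d jp.2.1 (g jp).1 <= 2 * (b ^+ jp.1 * R0).
  suff: forall jp : nat * (X * X), exists q : X * X,
    P d T jp.2.1 jp.2.2 (b ^+ jp.1 * R0) ->
    P d T q.1 q.2 (b ^+ jp.1.+1 * R0) /\ d jp.2.1 q.1 <= 2 * (b ^+ jp.1 * R0).
    by case/choice => g hg; exists g.
  move=> -[j [z w]] /=.
  case: (pselect (P d T z w (b ^+ j * R0))) => H; last by exists (z, w).
  have [z' [w' [H1 H2]]] := st _ _ _ H.
  by exists (z', w') => _; rewrite exprS -mulrA.
pose s := nat_rect (fun _ => (X * X)%type) (x0, x) (fun j p => g (j, p)).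
have sS : forall j, s j.+1 = g (j, s j) by [].
have Ps : forall j, P d T (s j).1 (s j).2 (b ^+ j * R0).
  elim => [|j IH] //; rewrite sS; exact: (hg (j, s j) IH).1.
have ds : forall j, d (s j).1 (s j.+1).1 <= 2 * (b ^+ j * R0).
  move=> j; rewrite sS; exact: (hg (j, s j) (Ps j)).2.
have cb : forall j i, d (s i).1 (s (i + j)%N).1 <= 2 * (b ^+ i * R0) / (1 - b).
  elim => [|j IH] i.
    rewrite addn0 (dE _ _).2 //; apply: divr_ge0; last lra.
    by rewrite mulr_ge0 // mulr_ge0 ?exprn_ge0 // ltW.
  rewrite -addSnnS; apply: le_trans (dT _ (s i.+1).1 _) _.
  have e : 2 * (b ^+ i.+1 * R0) / (1 - b) = 2 * (b^+i*R0) / (1-b) - 2*(b^+i*R0).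
    by rewrite exprS; field; lra.
  have := IH i.+1; rewrite e; have := ds i; lra.
have bb : 0 <= b < 1 by rewrite (ltW b0) b1.
have cauchy : forall e : R, 0 < e -> exists N, forall m n, (N <= m)%N -> (N <= n)%N ->
    d (s m).1 (s n).1 < e.
  move=> e e0.
  have eta0 : 0 < e * (1 - b) / (4 * R0).
    by apply: divr_gt0; [apply: mulr_gt0 => //; lra | lra].
  have [N HN] := @geo _ _ bb _ eta0.
  have key : forall m, (N <= m)%N -> d (s N).1 (s m).1 < e / 2.
    move=> m Nm; rewrite -(subnKC Nm); apply: le_lt_trans (cb _ _) _.
    have := HN N (leqnn N); rewrite ltr_pdivlMr; last lra.
    rewrite ltr_pdivrMr; last lra.
    lra.
  exists N => m n Nm Nn; apply: le_lt_trans (dT _ (s N).1 _) _.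
  rewrite dS; have := key m Nm; have := key n Nn; lra.
have [l hl] := hcomp (fun n => (s n).1) cauchy.
pose del := d l (T l).
have del0 : 0 < del.
  rewrite lt_def d0 andbT; apply/eqP => hh; apply: (nofix l); apply/esym/dE; exact: hh.
pose eps := del / (2 * (1 + 2 * kb)).
have heps : eps * (2 * (1 + 2 * kb)) = del by rewrite /eps; field; lra.
have eps0 : 0 < eps by apply: divr_gt0 => //; lra.
have [N1 HN1] := hl (eps / 2) ltac:(lra).
have pre : 0 < eps / (2 * R0) by apply: divr_gt0 => //; lra.
have [N2 HN2] := @geo _ _ bb _ pre.
pose j := maxn N1 N2.
have hj1 := HN1 j (leq_maxl _ _).
have hj2 := HN2 j (leq_maxr _ _).
rewrite ltr_pdivlMr in hj2; last lra.
have hD : forall y, torbit T (s j).2 y -> d l y <= eps.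
  move=> y hy; apply: le_trans (dT _ (s j).1 _) _.
  have := Ps j y hy; rewrite dS in hj1 *; lra.
have epsdel : eps <= del.
  by rewrite -heps; apply: ler_peMr; [exact: ltW|lra].
have cond : (Dsup d l (torbit T (s j).2) <= Dsup d l (torbit T l))%E.
  apply: le_trans ((Dsup_leP _ _ _ _).2 hD) _.
  apply: le_trans (Dsup_ge d l (orbit_iter T l 1)); rewrite lee_fin /=; exact: epsdel.
have hlim := HL l (s j).2 cond 1%N isT.
have hlt : (limn (fun m : nat => Dsup d (iter 1 T l) (torbit T (iter m T (s j).2)))
    < (2 * kb * eps)%:E)%E.
  apply: le_lt_trans hlim _.
  apply: (@le_lt_trans _ _ (kb%:E * eps%:E)%E).
    by apply: lee_wpmul2l; [rewrite lee_fin ltW|exact/Dsup_leP].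
  rewrite -EFinM lte_fin; nra.
have [m hm] := limn_lt (fun m => Dsup_sub d (iter 1 T l) (@orbit_sub _ T (iter m T (s j).2) 1)) hlt.
have h1 := (Dsup_leP _ _ _ _).1 (ltW hm) _ (orbit_iter T (iter m T (s j).2) 0).
have h2 := hD _ (orbit_iter T (s j).2 m).
have h3 := dT l (iter m T (s j).2) (T l).
rewrite [d (iter m T _) (T l)]dS in h3.
have hdel : del = d l (T l) by [].
simpl in h1; lra.

Qed.
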